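(* Let $f(n)=a_kn^k+a_{k-1}n^{k-1}+\cdots+a_0\in\mathbb{R}[n]$ be a polynomial of degree $k$ (so $a_k\neq0$). Then the sequence $(f(n))_{n\ge0}$ is: (1) not asymptotically $1$-log-concave if and only if $k=0$; (2) asymptotically $1$-log-concave but not asymptotically $2$-log-concave if and only if $k=1$; (3) asymptotically $r$-log-concave for every $r\geq1$ if and only if $k\geq 2$.
   Context: For a real sequence $\omega=(w_i)_{i\ge0}$ define $\widehat{\mathcal L}\omega=(w_{i+1}^2-w_iw_{i+2})_{i\ge0}$ and $\widehat{\mathcal L}^j\omega=\widehat{\mathcal L}(\widehat{\mathcal L}^{j-1}\omega)$. The sequence $\omega$ is asymptotically $r$-log-concave if there is $N$ such that $(\widehat{\mathcal L}^j\omega)_i>0$ for all $j\in\{1,\ldots,r\}$ and all $i\geq N$. *)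

(* Defs.v *)
From mathcomp Require Import all_boot all_order all_algebra.
From mathcomp Require Import reals.
Set Implicit Arguments. Unset Strict Implicit. Unset Printing Implicit Defensive.
Import Order.TTheory GRing.Theory Num.Theory.
Local Open Scope ring_scope.

Definition Lhat {R : realType} (w : nat -> R) : nat -> R :=
  fun i => w i.+1 ^+ 2 - w i * w i.+2.

Definition Lhat_iter {R : realType} (j : nat) (w : nat -> R) : nat -> R :=
  iter j (@Lhat R) w.

Definition asymp_rlc {R : realType} (r : nat) (w : nat -> R) : Prop :=
  exists N : nat, forall j i : nat, (1 <= j <= r)%N -> (N <= i)%N ->
    0 < Lhat_iter j w i.

(* Main.v *)
Require Import Defs.
From mathcomp Require Import all_boot all_order all_algebra.
From mathcomp Require Import reals.
From mathcomp Require Import polyrcf zify ring.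
Import Order.TTheory GRing.Theory Num.Theory.
Set Implicit Arguments. Unset Strict Implicit.
Local Open Scope ring_scope.

Section Helpers.
Variable R : realType.
Implicit Types (p q A B : {poly R}).

Definition Dg (q : {poly R}) (m : nat) (c : R) := (size q <= m.+1)%N /\ q`_m = c.

Lemma Dg0 m : Dg 0 m 0.
Proof. by split; rewrite ?size_poly0 ?coef0. Qed.

Lemma DgD A B m ca cb : Dg A m ca -> Dg B m cb -> Dg (A + B) m (ca + cb).
Proof.
move=> [sA cA] [sB cB]; split; last by rewrite coefD cA cB.
by apply: leq_trans (size_polyD _ _) _; rewrite geq_max sA sB.
Qed.

Lemma DgN A m c : Dg A m c -> Dg (- A) m (- c).
Proof. by move=> [sA cA]; split; rewrite ?size_polyN ?coefN ?cA. Qed.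

Lemma DgM A B ma mb ca cb : Dg A ma ca -> Dg B mb cb ->
  Dg (A * B) (ma + mb) (ca * cb).
Proof.
move=> [sA cA] [sB cB]; split.
  apply: leq_trans (size_polyMleq _ _) _.
  by move: sA sB; case: (size A) => [|x]; case: (size B) => [|y] //=; lia.
rewrite coefM (bigD1 (Ordinal (leq_addr mb ma.+1))) //= subDnCA // subnn addn0.
rewrite cA cB big1 ?addr0 // => [[j hj]] /= hne.
have hne' : j <> ma by move=> E; move: hne; rewrite -val_eqE /= E eqxx.
case: (ltngtP j ma) => [hlt|hgt|//].
  rewrite [B`__]nth_default ?mulr0 //; apply: leq_trans sB _; lia.
rewrite [A`__]nth_default ?mul0r //; apply: leq_trans sA _; lia.
Qed.

Lemma Dg_sum (I : finType) (P : pred I) (F : I -> {poly R}) (c : I -> R) m :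
  (forall i, P i -> Dg (F i) m (c i)) ->
  Dg (\sum_(i | P i) F i) m (\sum_(i | P i) c i).
Proof.
move=> H; apply: (big_ind2 (fun A c => Dg A m c)) => //; first exact: Dg0.
by move=> *; apply: DgD.
Qed.

Lemma Dg_weak A m c m' : Dg A m c -> (m < m')%N -> Dg A m' 0.
Proof.
move=> [sA _] lt; split; first by apply: leq_trans sA _; lia.
by rewrite nth_default //; apply: leq_trans sA _.
Qed.

Lemma Dg_eq A m c m' c' : Dg A m c -> m = m' -> c = c' -> Dg A m' c'.
Proof. by move=> H <- <-. Qed.

Lemma Dg_final A m c : Dg A m c -> c != 0 -> size A = m.+1 /\ lead_coef A = c.
Proof.
move=> [sA cA] c0.
have hs : size A = m.+1.
  apply/eqP; rewrite eqn_leq sA /=; rewrite ltnNge; apply/negP => hle.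
  by move: c0; rewrite -cA nth_default ?eqxx.
by split => //; rewrite lead_coefE hs.
Qed.


Lemma evpos q : 0 < lead_coef q -> exists N : nat, forall i, (N <= i)%N -> 0 < q.[i%:R].
Proof.
move=> lq; have [x0 Hx] := poly_pinfty_gt_lc lq.
exists (Num.bound `|x0|) => i hi; apply: lt_le_trans lq (Hx _ _).
apply: le_trans (ler_norm x0) _; apply: le_trans (ltW (archi_boundP (normr_ge0 x0))) _.
by rewrite ler_nat.
Qed.

Lemma Lstep p n : size p = n.+2 ->
  exists q, size q = (n + n).+1 /\
    lead_coef q = lead_coef p ^+ 2 * (n.+1)%:R /\
    forall i, Lhat (fun k : nat => p.[k%:R]) i = q.[i%:R].
Proof.
move=> sp.
pose a := lead_coef p.
have a0 : a != 0 by rewrite lead_coef_eq0 -size_poly_eq0 sp.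
have Dp : Dg p n.+1 a by split; rewrite ?sp // /a lead_coefE sp.
pose So := \sum_(j < n.+2 | odd j) p^`N(j).
pose u := \sum_(j < n.+2 | ~~ odd j && (j != ord0)) p^`N(j).
pose q := So * So - u * (p + p + u).
have DSo : Dg So n (a *+ n.+1).
  have -> : a *+ n.+1 = \sum_(j < n.+2 | odd j) (if val j == 1%N then a *+ n.+1 else 0).
    rewrite (bigD1 (@Ordinal n.+2 1 isT)) //= big1 ?addr0 //.
    move=> j /andP[_ hj]; rewrite ifN //; apply: contra hj => /eqP h.
  rewrite /So; apply: Dg_sum => j hj.
  have j1 : (0 < j)%N by move: hj; case: (nat_of_ord j).
  split.
    rewrite /nderivn; apply: leq_trans (size_poly _ _) _; rewrite sp; lia.
  rewrite coef_nderivn; case: eqP => [->|hne].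
    by rewrite add1n bin1 Dp.2.
  rewrite nth_default ?mul0rn //; rewrite sp.
  have : j <> 2%N :> nat by move=> h; move: hj; rewrite h.
  have hne2 : nat_of_ord j <> 1%N := hne. lia.
have Du : Dg (u * (p + p + u)) (n + n) (a ^+ 2 * (n.+1 * n)%:R).
  destruct n as [|m].
    have -> : u = 0.
      rewrite /u big1 // => j /andP[hj1 hj2].
      move: hj1 hj2; case: j => [[|[|j]] hj] //=.
    by rewrite mul0r muln0 mulr0; apply: Dg0.
  have Du' : Dg u m (a *+ 'C(m.+2, 2)).
    have -> : a *+ 'C(m.+2, 2) = \sum_(j < m.+3 | ~~ odd j && (j != ord0))
        (if val j == 2%N then a *+ 'C(m.+2, 2) else 0).
      rewrite (bigD1 (@Ordinal m.+3 2 isT)) //= big1 ?addr0 //.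
      move=> j /andP[_ hj]; rewrite ifN //; apply: contra hj => /eqP h.
    rewrite /u; apply: Dg_sum => j /andP[hj1 hj2].
    have j2 : (2 <= j)%N.
      move: hj1 hj2; case: j => [[|[|j]] hj] //=.
    split.
      rewrite /nderivn; apply: leq_trans (size_poly _ _) _; rewrite sp; lia.
    rewrite coef_nderivn; case: eqP => [->|hne].
      by rewrite add2n Dp.2.
    rewrite nth_default ?mul0rn //; rewrite sp.
    have : j <> 3%N :> nat by move=> h; move: hj1; rewrite h.
    have hne2 : nat_of_ord j <> 2%N := hne. lia.
  have D2 : Dg (p + p + u) m.+2 (a + a + 0).
    apply: DgD; first exact: DgD.
    by apply: Dg_weak Du' _.
  apply: Dg_eq (DgM Du' D2) _ _; first lia.
  have hC : (m.+2 * m.+1 = 2 * 'C(m.+2, 2))%N by rewrite -mul_bin_diag bin1.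
  rewrite hC natrM; ring.
have Dq : Dg q (n + n) (a ^+ 2 * (n.+1)%:R).
  apply: Dg_eq (DgD (DgM DSo DSo) (DgN Du)) erefl _.
  rewrite natrM -natr1; ring.
have q0 : a ^+ 2 * (n.+1)%:R != 0 by rewrite mulf_neq0 ?expf_neq0 ?pnatr_eq0.
have [sq lq] := Dg_final Dq q0.
pose q2 := q \Po ('X + 1%:P).
have lq2 : lead_coef q2 = a ^+ 2 * (n.+1)%:R.
  by rewrite lead_coef_comp ?size_XaddC // lead_coefXaddC expr1n mulr1.
exists q2; split; [|split => //].
  have : q2 != 0 by rewrite -lead_coef_eq0 lq2.
  rewrite -size_poly_gt0 => hs.
  by rewrite -(prednK hs) size_comp_poly size_XaddC sq muln1.
move=> i; rewrite /Lhat /= /q2 horner_comp [('X + _).[_]]hornerD hornerX hornerC natr1.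
set y : R := (i.+1)%:R.
have e2 : ((i.+2)%:R : R) = y + 1 by rewrite /y natr1.
have e0 : (i%:R : R) = y + -1 by rewrite /y -natr1 addrK.
have E1 : p.[y + 1] = So.[y] + (p.[y] + u.[y]).
  rewrite (nderiv_taylor p (commr1 y)) sp (bigID (fun j : 'I_n.+2 => odd j)) /=.
  congr (_ + _).
    by rewrite /So horner_sum; apply: eq_bigr => j _; rewrite expr1n mulr1.
  rewrite (bigD1 ord0) //= nderivn0 expr0 mulr1 /u horner_sum; congr (_ + _).
  by apply: eq_bigr => j _; rewrite expr1n mulr1.
have E0 : p.[y + -1] = - So.[y] + (p.[y] + u.[y]).
  rewrite (nderiv_taylor p (commrN1 y)) sp (bigID (fun j : 'I_n.+2 => odd j)) /=.
  congr (_ + _).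
    rewrite /So horner_sum -sumrN; apply: eq_bigr => j hj.
    by rewrite -signr_odd hj expr1 mulrN1.
  rewrite (bigD1 ord0) //= nderivn0 expr0 mulr1 /u horner_sum; congr (_ + _).
  apply: eq_bigr => j /andP[hj _].
  by rewrite -signr_odd (negbTE hj) expr0 mulr1.
have Eq : q.[y] = So.[y] * So.[y] - u.[y] * (p.[y] + p.[y] + u.[y]).
  by rewrite /q hornerD hornerN !hornerM !hornerD.
rewrite e2 e0 E1 E0 Eq; ring.
Qed.

End Helpers.

Section Main.
Variable R : realType.

Lemma Lhat_ext (w1 w2 : nat -> R) : (forall i, w1 i = w2 i) ->
  forall i, Lhat w1 i = Lhat w2 i.
Proof. by move=> h i; rewrite /Lhat !h. Qed.

Lemma iter_poly (p : {poly R}) n : size p = n.+3 -> forall j, (1 <= j)%N ->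
  exists q : {poly R}, (3 <= size q)%N /\ 0 < lead_coef q /\
    forall i, Lhat_iter j (fun k : nat => p.[k%:R]) i = q.[i%:R].
Proof.
move=> sp; elim => [//|j IH] _.
have a0 : 0 < lead_coef p ^+ 2.
  by rewrite exprn_even_gt0 //= lead_coef_eq0 -size_poly_eq0 sp.
case: j IH => [_|j IH].
  have [q [sq [lq hq]]] := Lstep sp.
  exists q; split; first by rewrite sq; lia.
  by split; [rewrite lq mulr_gt0 // ltr0n | by []].
have [q [sq [lq hq]]] := IH isT.
have [m sm] : exists m, size q = m.+3 by exists (size q - 3)%N; lia.
have [q2 [sq2 [lq2 hq2]]] := Lstep sm.
exists q2; split; first by rewrite sq2; lia.
split; first by rewrite lq2 mulr_gt0 ?ltr0n ?exprn_gt0.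
move=> i; change (Lhat (Lhat_iter j.+1 (fun k : nat => p.[k%:R])) i = q2.[i%:R]).
by rewrite (Lhat_ext hq) hq2.
Qed.

Lemma asymp_from (w : nat -> R) :
  (forall j, (1 <= j)%N -> exists N, forall i, (N <= i)%N -> 0 < Lhat_iter j w i) ->
  forall r, asymp_rlc r w.
Proof.
move=> H; elim=> [|r [N HN]].
  by exists 0%N => j i /andP[h1 h2]; exfalso; lia.
have [N2 HN2] := H r.+1 isT.
exists (maxn N N2) => j i /andP[h1 h2] hi.
have [->|hne] := eqVneq j r.+1; first by apply: HN2; lia.
apply: HN; last by lia.
by apply/andP; split; move/eqP: hne; lia.
Qed.

End Main.

Theorem corollary4p10 (R : realType) (f : {poly R}) (hf : f != 0) :
  let k := (size f).-1 in
  let w := fun n : nat => f.[n%:R] in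
  [/\ (~ asymp_rlc 1 w <-> k = 0%N),
      ((asymp_rlc 1 w /\ ~ asymp_rlc 2 w) <-> k = 1%N)
    & ((forall r : nat, (1 <= r)%N -> asymp_rlc r w) <-> (2 <= k)%N)].
Proof.
move=> k w.
have sf : size f = k.+1 by rewrite /k prednK // size_poly_gt0.
have H0 : k = 0%N -> forall i, Lhat w i = 0.
  move=> hk i; have hs : (size f <= 1)%N by rewrite sf hk.
  by rewrite /Lhat /w (size1_polyC hs) !hornerC expr2 subrr.
have Hn0 : k = 0%N -> ~ asymp_rlc 1 w.
  move=> hk [N HN]; have := HN 1%N N isT (leqnn N).
  by rewrite /Lhat_iter /= H0 // ltxx.
have H1 : (1 <= k)%N -> asymp_rlc 1 w.
  move=> hk; have sf' : size f = k.-1.+2 by rewrite sf; lia.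
  have [q [_ [lq hq]]] := Lstep sf'.
  have lq0 : 0 < lead_coef q.
    rewrite lq mulr_gt0 ?ltr0n // exprn_even_gt0 //= lead_coef_eq0 //.
  have [N HN] := evpos lq0.
  exists N => j i /andP[h1 h2] hi.
  have -> : j = 1%N by lia.
  by rewrite /Lhat_iter /= /w hq; apply: HN.
have H2 : k = 1%N -> ~ asymp_rlc 2 w.
  move=> hk; have sf' : size f = 0.+2 by rewrite sf hk.
  have [q [sq [lq hq]]] := Lstep sf'.
  have hq' : forall i, Lhat w i = q`_0.
    have hc := size1_polyC (_ : (size q <= 1)%N); rewrite sq in hc.
    by move=> i; rewrite /w hq {1}(hc isT) hornerC.
  move=> [N HN]; have := HN 2%N N isT (leqnn N).
  change (0 < Lhat (Lhat w) N -> False).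
  by rewrite (Lhat_ext hq') /Lhat expr2 subrr ltxx.
have H3 : (2 <= k)%N -> forall r, asymp_rlc r w.
  move=> hk; apply: asymp_from => j hj.
  have sf' : size f = (k - 2).+3 by rewrite sf; lia.
  have [q [_ [lq hq]]] := iter_poly sf' hj.
  have [N HN] := evpos lq.
  by exists N => i hi; rewrite /w hq; apply: HN.
split.
- split.
    move=> h; case: (posnP k) => [//|hk]; exfalso; exact: h (H1 hk).
  exact: Hn0.
- split.
    move=> [h1 h2].
    have : k <> 0%N by move=> /Hn0.
    have : ~ (2 <= k)%N by move=> /H3 /(_ 2%N); apply: h2.
    lia.
  by move=> hk; split; [apply: H1; rewrite hk | exact: H2].
- split.
    move=> h.
    have : k <> 0%N by move=> /Hn0; apply; apply: h.
    have : k <> 1%N by move=> /H2; apply; apply: h.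
    lia.
  by move=> hk r _; apply: H3.
Qed.
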